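(* Let $\mathbf{x}$ be a set of $d'$ distinct real numbers, let $[L,R]$ be an interval of integers (with $L\le R$), and let $n\le d'$ be a nonnegative integer. Consider any probabilistic process $P$ that chooses a uniformly random subset $S\subseteq\mathbf{x}$ of size $n$ and then selects (arbitrarily, possibly depending on $S$) a real interval $I=[I_\ell,I_r]$ such that $|S\cap I|\in[L,R]$. Then \[ \mathop{\mathbb{P}}_{(S,I)\sim P}\left[|\mathbf{x}\cap I|\in\left(\frac12L\frac{d'}{n},\,2R\frac{d'}{n}\right)\right]\ge 1-3d'\exp\left(-\frac{L}{6}\right). \] *)

(* Defs.v *)
From HB Require Import structures.
From mathcomp Require Import all_boot all_order all_algebra.
From mathcomp Require Import reals.
From mathcomp Require Import sequences exp.
Set Implicit Arguments. Unset Strict Implicit. Unset Printing Implicit Defensive.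
Import Order.TTheory GRing.Theory Num.Theory.
Local Open Scope ring_scope.

Definition cnt_in (R : realType) (d : nat) (x : 'I_d -> R)
  (A : {set 'I_d}) (I : R * R) : nat :=
  #|[set i in A | (I.1 <= x i <= I.2)]|.

(* Probability, under the process (S uniform n-subset of indices, then the
   interval I S w chosen with probability q S w), of the event E S I. *)
Definition proc_prob (R : realType) (d n : nat) (Omega : finType)
  (q : {set 'I_d} -> Omega -> R) (I : {set 'I_d} -> Omega -> R * R)
  (E : {set 'I_d} -> R * R -> bool) : R :=
  \sum_(S : {set 'I_d} | #|S| == n)
     ('C(d, n)%:R)^-1 * \sum_(w : Omega) q S w * (if E S (I S w) then 1 else 0).

(* Main.v *)
Require Import Defs.
From HB Require Import structures.
From mathcomp Require Import all_boot all_order all_algebra.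
From mathcomp Require Import reals.
From mathcomp Require Import sequences exp.
From mathcomp Require Import zify ring lra.
Import Order.TTheory GRing.Theory Num.Theory.
Local Open Scope ring_scope.

Set Implicit Arguments. Unset Strict Implicit. Unset Printing Implicit Defensive.

Section Comb.
Variable R : realType.
Variable T : finType.

Lemma ex_maxnP' (I : finType) (P : pred I) (F : I -> nat) i0 :
  P i0 -> exists2 i, P i & forall j, P j -> (F j <= F i)%N.
Proof. by move=> Pi0; case: (arg_maxP F Pi0) => i Pi H; exists i. Qed.

Lemma ex_minnP' (I : finType) (P : pred I) (F : I -> nat) i0 :
  P i0 -> exists2 i, P i & forall j, P j -> (F i <= F j)%N.
Proof. by move=> Pi0; case: (arg_minP F Pi0) => i Pi H; exists i. Qed.

Lemma ex_minP (I : finType) (P : pred I) (F : I -> R) i0 :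
  P i0 -> exists2 i, P i & forall j, P j -> F i <= F j.
Proof. by move=> Pi0; case: (arg_minP F Pi0) => i Pi H; exists i. Qed.

Lemma ex_maxP (I : finType) (P : pred I) (F : I -> R) i0 :
  P i0 -> exists2 i, P i & forall j, P j -> F j <= F i.
Proof. by move=> Pi0; case: (arg_maxP F Pi0) => i Pi H; exists i. Qed.

Lemma expand (c : R) (K : {set T}) :
  (1 + c) ^+ #|K| = \sum_(J : {set T}) (if J \subset K then c ^+ #|J| else 0).
Proof.
have -> : (1 + c) ^+ #|K| = \prod_(i : T) ((if i \in K then c else 0) + 1).
  transitivity (\prod_(i in K) (1 + c)); first by rewrite prodr_const.
  rewrite big_mkcond; apply: eq_bigr => i _.
  by case: (i \in K); rewrite ?add0r // addrC.
rewrite bigA_distr; apply: eq_bigr => J _.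
rewrite -big_mkcond /=.
case: ifP => [/subsetP sJK | /negbT/subsetPn [i iJ iK]].
  rewrite -prodr_const; apply: eq_bigr => i /sJK ->. done.
by rewrite (bigD1 i) //= (negbTE iK) mul0r.
Qed.

Lemma bin_ratio d n j : (j <= n -> n <= d -> 'C(d-j, n-j) * d^j <= 'C(d,n) * n^j)%N.
Proof.
elim: j => [|j IH] hjn hnd; first by rewrite !subn0 !expn0 !muln1.
have hj : (j <= n)%N by lia.
have IH' := IH hj hnd.
have E := mul_bin_diag (d - j) (n - j.+1).
have e1 : ((d - j).-1 = d - j.+1)%N by lia.
have e2 : ((n - j.+1).+1 = n - j)%N by lia.
rewrite e1 e2 in E.
have hpos : (0 < d - j)%N by lia.
rewrite -(leq_pmul2l hpos) !expnS.
set a := 'C(d - j.+1, n - j.+1) in E *.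
set b := 'C(d - j, n - j) in E IH' *.
set C := 'C(d, n) in IH' *.
have h1 : ((n - j) * d <= (d - j) * n)%N by nia.
have -> : ((d - j) * (a * (d * d ^ j)) = ((d-j) * a) * d * d^j)%N by ring.
rewrite E.
have -> : ((n - j) * b * d * d ^ j = ((n-j) * d) * (b * d^j))%N by ring.
have -> : ((d - j) * (C * (n * n ^ j)) = ((d-j) * n) * (C * n^j))%N by ring.
exact: leq_mul.
Qed.

Lemma cnt_sup (n : nat) (J : {set T}) : (n <= #|T|)%N ->
  (#|[set S : {set T} | (#|S| == n) && (J \subset S)]|%:R : R)
     <= 'C(#|T|, n)%:R * (n%:R / #|T|%:R) ^+ #|J|.
Proof.
move=> hn.
case: (leqP #|J| n) => hj; last first.
  suff -> : [set S : {set T} | (#|S| == n) && (J \subset S)] = set0.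
    by rewrite cards0 mulr_ge0 // exprn_ge0 // divr_ge0.
  apply/setP => S; rewrite !inE; apply/negP => /andP[/eqP hS /subset_leq_card].
  lia.
have h1 : (#|[set S : {set T} | (#|S| == n) && (J \subset S)]|
            <= 'C(#|T| - #|J|, n - #|J|))%N.
  have eJ : #|~: J| = (#|T| - #|J|)%N by rewrite cardsCs setCK.
  rewrite -eJ -cards_draws.
  rewrite -(@card_in_imset _ _ (fun S => S :\: J)); last first.
    move=> S1 S2; rewrite !inE => /andP[_ h1] /andP[_ h2] E.
    apply/setP => x; case xJ: (x \in J).
      by rewrite (subsetP h1 _ xJ) (subsetP h2 _ xJ).
    by have := f_equal (fun A : {set T} => x \in A) E; rewrite /= !inE xJ.
  apply: subset_leq_card; apply/subsetP => B /imsetP[S]; rewrite !inE.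
  move=> /andP[/eqP hS hJS] ->.
  rewrite setDE subsetIr /= -setDE cardsD (setIidPr hJS) hS eqxx //.
have h2 := bin_ratio hj hn.
case: (posnP #|J|) => hJ0.
  rewrite hJ0 expr0 mulr1 ler_nat; rewrite hJ0 !subn0 in h1; exact: h1.
have hT : (0 < #|T|)%N by lia.
apply: (le_trans (y := 'C(#|T| - #|J|, n - #|J|)%:R)); first by rewrite ler_nat.
rewrite expr_div_n mulrA ler_pdivlMr ?exprn_gt0 ?ltr0n //.
by rewrite -!natrX -!natrM ler_nat.
Qed.

Lemma mgf (K : {set T}) n (w : R) : 0 <= w -> (n <= #|T|)%N ->
  \sum_(S : {set T} | #|S| == n) (1+w)^+#|S :&: K|
    <= 'C(#|T|,n)%:R * (1 + w * (n%:R / #|T|%:R))^+#|K|.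
Proof.
move=> w0 hn.
under eq_bigr => S _ do rewrite expand.
rewrite exchange_big /= expand big_distrr /=.
apply: ler_sum => J _.
case: ifP => hJK; last first.
  rewrite mulr0 big1 // => S _.
  case: ifP => // /subsetP h; exfalso; move/negbT/subsetPn: hJK => [i iJ iK].
  by move: (h i iJ); rewrite inE (negbTE iK) andbF.
rewrite -big_mkcondr /=.
rewrite (eq_bigl (fun S => S \in [set S : {set T} | (#|S| == n) && (J \subset S)])); last first.
  move=> S; rewrite !inE subsetI hJK andbT //.
rewrite sumr_const exprMn mulrA.
rewrite -mulr_natl mulr1 -mulrA (mulrC (w ^+ _)) mulrA mulrC.
rewrite -[X in X <= _]mulr_natr; apply: ler_wpM2l; [exact: exprn_ge0 | exact: cnt_sup].
Qed.

Lemma tail_ge (K : {set T}) n (w : R) (a : nat) : 0 <= w -> (n <= #|T|)%N ->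
  #|[set S : {set T} | (#|S| == n) && (a <= #|S :&: K|)%N]|%:R * (1+w)^+a
   <= 'C(#|T|,n)%:R * (1 + w * (n%:R / #|T|%:R))^+#|K|.
Proof.
move=> w0 hn; apply: le_trans (mgf K w0 hn).
rewrite mulrC mulr_natr -sumr_const [X in _ <= X]big_mkcond [X in X <= _]big_mkcond /=.
apply: ler_sum => S _; rewrite inE.
case: (#|S| == n) => //=; case: ifP => ha; last by rewrite exprn_ge0 // addr_ge0.
by apply: ler_weXn2l => //; rewrite lerDl.
Qed.

Lemma tail_le (K : {set T}) n (w : R) (b : nat) : 0 <= w -> (n <= #|T|)%N ->
  #|[set S : {set T} | (#|S| == n) && (#|S :&: K| <= b)%N]|%:R * (1+w)^+(#|K| - b)
   <= 'C(#|T|,n)%:R * (1 + w * ((#|T| - n)%N%:R / #|T|%:R))^+#|K|.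
Proof.
move=> w0 hn.
rewrite -(bin_sub hn).
apply: le_trans (tail_ge K (#|K| - b) w0 (leq_subr _ _)).
apply: ler_wpM2r; first by apply: exprn_ge0; rewrite addr_ge0.
rewrite ler_nat -(card_imset _ (@setC_inj T)).
apply: subset_leq_card; apply/subsetP => B /imsetP[S]; rewrite !inE.
move=> /andP[/eqP hS hb] ->.
rewrite cardsCs setCK hS eqxx /=.
have := cardsID S K.
rewrite setIC in hb.
have -> : ~: S :&: K = K :\: S by rewrite setDE setIC.
lia.
Qed.

Lemma sq_le (a b : R) : 0 <= a -> a <= b -> a ^+ 2 <= b ^+ 2.
Proof. by move=> a0 ab; rewrite lerXn2r // nnegrE (le_trans a0 ab). Qed.

Lemma expR23 : expR (2/3 : R) <= 2.
Proof.
have h1 : expR (1/24 : R) <= 24/23.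
  have h := expR_ge1Dx (- (1/24) : R).
  rewrite expRN in h.
  have hp := expR_gt0 (1/24 : R).
  set e := expR (1/24 : R) in h hp *.
  have : (1 + - (1/24)) * e <= e^-1 * e by rewrite ler_wpM2r // ltW.
  rewrite mulVf ?lt0r_neq0 //.
  lra.
have -> : (2/3 : R) = 16%:R * (1/24) by lra.
rewrite expRM_natl.
have hp := ltW (expR_gt0 (1/24 : R)).
set e := expR (1/24 : R) in h1 hp *.
have e2 : e ^+ 2 <= 49/45.
  apply: le_trans (sq_le hp h1) _; rewrite expr2; lra.
have e4 : e ^+ 4 <= 51/43.
  have -> : e ^+ 4 = (e ^+ 2) ^+ 2 by rewrite -exprM.
  apply: le_trans (sq_le (exprn_ge0 _ hp) e2) _; rewrite expr2; lra.
have e8 : e ^+ 8 <= 38/27.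
  have -> : e ^+ 8 = (e ^+ 4) ^+ 2 by rewrite -exprM.
  apply: le_trans (sq_le (exprn_ge0 _ hp) e4) _; rewrite expr2; lra.
have -> : e ^+ 16 = (e ^+ 8) ^+ 2 by rewrite -exprM.
apply: le_trans (sq_le (exprn_ge0 _ hp) e8) _; rewrite expr2; lra.
Qed.

Definition seg (x : T -> R) i j := [set l | x i <= x l <= x j].


Lemma seg_nested x i j j' : x i <= x j -> x i <= x j' ->
  (#|seg x i j| <= #|seg x i j'|)%N -> seg x i j \subset seg x i j'.
Proof.
move=> hj hj' hc; case: (leP (x j) (x j')) => h.
  by apply/subsetP => l; rewrite /seg !inE => /andP[a b]; rewrite a (le_trans b h).
have : seg x i j' \proper seg x i j.
  apply/properP; split.
    by apply/subsetP => l; rewrite /seg !inE => /andP[a b]; rewrite a (le_trans b (ltW h)).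
  exists j; first by rewrite /seg !inE hj lexx.
  by rewrite /seg !inE hj /= -ltNge h.
by move/proper_card; rewrite ltnNge hc.
Qed.

Lemma seg_ne x (A : {set T}) i j : (0 < #|A :&: seg x i j|)%N -> x i <= x j.
Proof.
by rewrite card_gt0 => /set0Pn [l]; rewrite /seg !inE => /andP[_ /andP[a b]]; apply: le_trans b.
Qed.

Lemma expR_pow_le (y : R) k : 0 <= 1 + y -> (1 + y) ^+ k <= expR (k%:R * y) .
Proof.
move=> hy; rewrite expRM_natl; apply: lerXn2r; rewrite ?nnegrE ?expR_ge0 //.
exact: expR_ge1Dx.
Qed.

Lemma low_i x (i : T) n (c1 : R) (Ln : nat) : (0 < n)%N -> (n <= #|T|)%N -> (0 < Ln)%N ->
  (n%:R / #|T|%:R) * c1 <= Ln%:R / 2 ->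
  (#|[set S : {set T} | (#|S| == n) && [exists j, (#|seg x i j|%:R <= c1)
       && (Ln <= #|S :&: seg x i j|)%N]]|%:R : R)
     <= 'C(#|T|,n)%:R * expR (- (Ln%:R / 6)).
Proof.
move=> n0 hn L0 hc.
have hp : 0 <= n%:R / #|T|%:R :> R by rewrite divr_ge0.
set P := fun j => (#|seg x i j|%:R <= c1) && (x i <= x j).
have wit : forall S j, (Ln <= #|S :&: seg x i j|)%N -> x i <= x j.
  by move=> S j h; apply: (@seg_ne x S); lia.
case: (boolP [exists j, P j]) => [/existsP [j1 Pj1] | hnone]; last first.
  suff -> : [set S : {set T} | (#|S| == n) && [exists j, (#|seg x i j|%:R <= c1)
       && (Ln <= #|S :&: seg x i j|)%N]] = set0.
    by rewrite cards0 mulr_ge0 // expR_ge0.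
  apply/setP => S; rewrite !inE; apply/negP => /andP[_ /existsP[j /andP[h1 h2]]].
  by move/existsP: hnone; apply; exists j; rewrite /P h1 (wit _ _ h2).
case: (ex_maxnP' (fun j => #|seg x i j|) Pj1) => j0 /andP[Pj0 xj0] hmax.
set K := seg x i j0.
have sub : [set S : {set T} | (#|S| == n) && [exists j, (#|seg x i j|%:R <= c1)
       && (Ln <= #|S :&: seg x i j|)%N]] \subset
       [set S : {set T} | (#|S| == n) && (Ln <= #|S :&: K|)%N].
  apply/subsetP => S; rewrite !inE => /andP[-> /existsP[j /andP[h1 h2]]] /=.
  have xj := wit _ _ h2.
  have := seg_nested xj xj0 (hmax j _); rewrite /P h1 xj => /(_ isT) hs.
  apply: leq_trans h2 _; apply: subset_leq_card; exact: setIS.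
apply: le_trans (_ : _ <= (#|[set S : {set T} | (#|S| == n) && (Ln <= #|S :&: K|)%N]|%:R : R)) _.
  by rewrite ler_nat subset_leq_card.
have tg := tail_ge K Ln (@ler01 R) hn.
set cnt := (#|_|%:R : R) in tg *.
have cnt0 : 0 <= cnt by [].
have e1 : (1 + 1 * (n%:R / #|T|%:R)) ^+ #|K| <= expR (Ln%:R / 2 : R).
  apply: le_trans (expR_pow_le _ _) _; first by rewrite mul1r addr_ge0.
  rewrite ler_expR mul1r mulrC; apply: le_trans hc.
  by apply: ler_wpM2l => //.
have t2 := le_trans tg (ler_wpM2l (ler0n _ _) e1).
have t3 : expR (Ln%:R * (2/3)) <= (1 + 1 : R) ^+ Ln.
  rewrite expRM_natl; apply: lerXn2r; rewrite ?nnegrE ?expR_ge0 //; have := expR23; lra.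
rewrite -(ler_pM2r (expR_gt0 (Ln%:R * (2/3)))) -mulrA -expRD.
have -> : - (Ln%:R / 6) + Ln%:R * (2 / 3) = Ln%:R / 2 :> R by field.
apply: le_trans t2; exact: ler_wpM2l.
Qed.

Lemma up_i x (i : T) n (c2 : R) (Rn : nat) : (0 < n)%N -> (n <= #|T|)%N -> 0 < c2 ->
  2 * Rn%:R <= (n%:R / #|T|%:R) * c2 ->
  (#|[set S : {set T} | (#|S| == n) && [exists j, (c2 <= #|seg x i j|%:R)
       && (#|S :&: seg x i j| <= Rn)%N]]|%:R : R)
     <= 'C(#|T|,n)%:R * expR (- (Rn%:R / 6)).
Proof.
move=> n0 hn c20 hc.
have dpos : (0 < #|T|)%N by lia.
set p := n%:R / #|T|%:R : R in hc *.
have hp : 0 <= p by rewrite divr_ge0.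
have hp1 : p <= 1 by rewrite ler_pdivrMr ?ltr0n // mul1r ler_nat.
set P := fun j => (c2 <= #|seg x i j|%:R).
have wit : forall j, P j -> x i <= x j.
  move=> j Pj; apply: (@seg_ne x setT); rewrite setTI.
  have : (0 : R) < #|seg x i j|%:R by apply: lt_le_trans Pj.
  by rewrite ltr0n.
case: (boolP [exists j, P j]) => [/existsP [j1 Pj1] | hnone]; last first.
  suff -> : [set S : {set T} | (#|S| == n) && [exists j, (c2 <= #|seg x i j|%:R)
       && (#|S :&: seg x i j| <= Rn)%N]] = set0.
    by rewrite cards0 mulr_ge0 // expR_ge0.
  apply/setP => S; rewrite !inE; apply/negP => /andP[_ /existsP[j /andP[h1 h2]]].
  by move/existsP: hnone; apply; exists j.
case: (ex_minnP' (fun j => #|seg x i j|) Pj1) => j0 Pj0 hmin.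
set K := seg x i j0.
have sub : [set S : {set T} | (#|S| == n) && [exists j, (c2 <= #|seg x i j|%:R)
       && (#|S :&: seg x i j| <= Rn)%N]] \subset
       [set S : {set T} | (#|S| == n) && (#|S :&: K| <= Rn)%N].
  apply/subsetP => S; rewrite !inE => /andP[-> /existsP[j /andP[h1 h2]]] /=.
  have hs := seg_nested (wit _ Pj0) (wit _ h1) (hmin j h1).
  apply: leq_trans h2; apply: subset_leq_card; exact: setIS.
apply: le_trans (_ : _ <= (#|[set S : {set T} | (#|S| == n) && (#|S :&: K| <= Rn)%N]|%:R : R)) _.
  by rewrite ler_nat subset_leq_card.
set z := expR (1/2 : R).
have z32 : 3/2 <= z by have := expR_ge1Dx (1/2 : R); rewrite -/z; lra.
have w0 : 0 <= z - 1 by lra.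
have tl := tail_le K Rn w0 hn.
set cnt := (#|_|%:R : R) in tl *.
have cnt0 : 0 <= cnt by [].
set k := #|K| in tl *.
have kc : c2 <= k%:R by [].
have Rk : (Rn <= k)%N.
  rewrite -(ler_nat R); have : p * c2 <= p * k%:R by apply: ler_wpM2l.
  have : p * k%:R <= k%:R by rewrite ler_piMl.
  have := ler0n R Rn; lra.
have ep : (#|T| - n)%N%:R / #|T|%:R = 1 - p.
  by rewrite natrB // mulrBl divff // pnatr_eq0 -lt0n.
rewrite ep in tl.
have b0 : 0 <= 1 + (z - 1) * (1 - p) by nra.
have b1 : 1 + (z - 1) * (1 - p) <= z * (1 - p / 3) by nra.
have t1 : (1 + (z - 1) * (1 - p)) ^+ k <= (z * (1 - p/3)) ^+ k.
  apply: lerXn2r; rewrite ?nnegrE // ; nra.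
have zpos : 0 < z by apply: expR_gt0.
have ek : z ^+ k = z ^+ (k - Rn)%N * z ^+ Rn by rewrite -exprD subnK.
rewrite exprMn ek in t1.
have ez : 1 + (z - 1) = z by ring.
rewrite ez in tl.
have t2 : cnt * z ^+ (k - Rn)%N <= 'C(#|T|, n)%:R * (z ^+ (k - Rn)%N * z ^+ Rn * (1 - p / 3) ^+ k).
  apply: le_trans; first exact: tl.
  apply: ler_wpM2l => //.
have zk : 0 < z ^+ (k - Rn)%N by apply: exprn_gt0.
have t3 : cnt <= 'C(#|T|, n)%:R * (z ^+ Rn * (1 - p / 3) ^+ k).
  rewrite -(ler_pM2r zk); apply: le_trans t2 _; rewrite le_eqVlt; apply/orP; left.
  apply/eqP; ring.
apply: le_trans t3 _; apply: ler_wpM2l => //.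
have e1 : (1 - p / 3) ^+ k <= expR (k%:R * (- (p / 3))).
  apply: expR_pow_le; lra.
have e2 : z ^+ Rn = expR (Rn%:R * (1/2)) by rewrite expRM_natl.
rewrite e2.
apply: le_trans (ler_wpM2l (expR_ge0 _) e1) _.
rewrite -expRD ler_expR.
have : 2 * Rn%:R <= p * k%:R.
  apply: le_trans hc _; by apply: ler_wpM2l.
lra.
Qed.

Lemma union_bound (I : finType) (P : pred {set T}) (Q : I -> pred {set T}) :
  (#|[set S : {set T} | P S && [exists i, Q i S]]|
    <= \sum_i #|[set S : {set T} | P S && Q i S]|)%N.
Proof.
have cE (A : {set {set T}}) : #|A| = (\sum_(S in A) 1)%N by rewrite sum1_card.
rewrite cE (eq_bigr (fun i => \sum_(S in [set S : {set T} | P S && Q i S]) 1)%N); last first.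
  by move=> i _; rewrite cE.
rewrite (exchange_big_dep predT) //= big_mkcond /=.
apply: leq_sum => S _; rewrite inE.
case: ifP => [/andP[PS /existsP[i Qi]] | _] //.
rewrite (bigD1 i) //= inE PS Qi /=.
done.
Qed.

Lemma union2 (P a b : pred {set T}) :
  (#|[set S : {set T} | P S && (a S || b S)]|%:R : R)
    <= #|[set S : {set T} | P S && a S]|%:R + #|[set S : {set T} | P S && b S]|%:R.
Proof.
rewrite -natrD ler_nat.
have -> : [set S : {set T} | P S && (a S || b S)] =
  [set S : {set T} | P S && a S] :|: [set S : {set T} | P S && b S].
  by apply/setP => S; rewrite !inE andb_orr.
by rewrite cardsU leq_subr.
Qed.

End Comb.

Unset Implicit Arguments.
Set Strict Implicit.

Lemma proc_lb (R : realType) (d n : nat) (Omega : finType)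
  (q : {set 'I_d} -> Omega -> R) (I : {set 'I_d} -> Omega -> R * R)
  (E : {set 'I_d} -> R * R -> bool) (B : {set {set 'I_d}}) :
  (0 < n)%N -> (n <= d)%N ->
  (forall (S : {set 'I_d}) w, #|S| = n -> 0 <= q S w) ->
  (forall S : {set 'I_d}, #|S| = n -> \sum_(w : Omega) q S w = 1) ->
  (forall (S : {set 'I_d}) w, #|S| = n -> 0 < q S w -> S \notin B -> E S (I S w)) ->
  1 - #|[set S in B | #|S| == n]|%:R / 'C(d, n)%:R <= proc_prob n q I E.
Proof.
move=> n0 hnd q0 q1 hE.
have Cpos : (0 : R) < 'C(d, n)%:R by rewrite ltr0n bin_gt0.
have step : forall S : {set 'I_d}, #|S| = n ->
   1 - (if S \in B then 1 else 0) <= \sum_(w : Omega) q S w * (if E S (I S w) then 1 else 0).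
  move=> S hS; case: ifP => hB.
    by rewrite subrr; apply: sumr_ge0 => w _; rewrite mulr_ge0 ?q0 //; case: ifP.
  rewrite subr0 -[X in X <= _](q1 S hS) le_eqVlt; apply/orP; left; apply/eqP.
  apply: eq_bigr => w _; have := q0 S w hS; rewrite le_eqVlt => /orP[/eqP <-|hq].
    by rewrite mul0r.
  have -> : E S (I S w) = true by apply: hE => //; rewrite hB.
  by rewrite /= mulr1.
rewrite /proc_prob.
apply: le_trans (_ : _ <= \sum_(S : {set 'I_d} | #|S| == n)
    ('C(d, n)%:R)^-1 * (1 - (if S \in B then 1 else 0))) _; last first.
  apply: ler_sum => S /eqP hS; apply: ler_wpM2l; first by rewrite invr_ge0 ltW.
  exact: step.
rewrite -mulr_sumr sumrB.
have e1 : \sum_(S : {set 'I_d} | #|S| == n) (1 : R) = 'C(d, n)%:R.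
  rewrite (eq_bigl (fun S => S \in [set S : {set 'I_d} | #|S| == n])); last first.
    by move=> S; rewrite inE.
  by rewrite sumr_const card_draws card_ord.
have e2 : \sum_(S : {set 'I_d} | #|S| == n) (if S \in B then 1 else 0 : R)
    = #|[set S in B | #|S| == n]|%:R.
  rewrite -big_mkcondr /=.
  rewrite (eq_bigl (fun S => S \in [set S in B | #|S| == n])); last first.
    by move=> S; rewrite !inE andbC.
  by rewrite sumr_const.
rewrite e1 e2 mulrBr mulVf ?lt0r_neq0 //.
by rewrite [_^-1 * _]mulrC.
Qed.

Theorem lemmaF4 (R : realType) (d n : nat) (x : 'I_d -> R) (L Rb : int)
  (Omega : finType) (q : {set 'I_d} -> Omega -> R)
  (I : {set 'I_d} -> Omega -> R * R) :
  injective x ->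
  (L <= Rb)%R ->
  (0 < n)%N -> (n <= d)%N ->
  (forall (S : {set 'I_d}) w, #|S| = n -> 0 <= q S w) ->
  (forall S : {set 'I_d}, #|S| = n -> \sum_(w : Omega) q S w = 1) ->
  (forall (S : {set 'I_d}) w, #|S| = n -> 0 < q S w ->
     (L <= (cnt_in x S (I S w))%:Z <= Rb)%R) ->
  proc_prob n q I (fun _ J =>
      ((1 / 2 : R) * L%:~R * d%:R / n%:R < (cnt_in x setT J)%:R)
      && ((cnt_in x setT J)%:R < (2 : R) * Rb%:~R * d%:R / n%:R))
  >= 1 - 3 * d%:R * expR (- (L%:~R / 6)).
Proof.
move=> _ hLR n0 hnd q0 q1 qI.
have dpos : (0 < d)%N by lia.
have Cpos : (0 : R) < 'C(d, n)%:R by rewrite ltr0n bin_gt0.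
have hd : (1 : R) <= d%:R by rewrite ler1n.
case: (lerP L 0) => hL.
  apply: (le_trans _ (@proc_lb R d n Omega q I _ setT n0 hnd q0 q1 _)); last first.
    by move=> S w _ _; rewrite inE.
  have -> : [set S in [set: {set 'I_d}] | #|S| == n] = [set S : {set 'I_d} | #|S| == n].
    by apply/setP => S; rewrite !inE.
  rewrite card_draws card_ord divff ?lt0r_neq0 // subrr.
  have hLr : (L%:~R : R) <= 0 by rewrite lerz0.
  have h1 := expR_ge1Dx (- (L%:~R / 6) : R).
  have : 1 <= expR (- (L%:~R / 6) : R) by lra.
  nra.
move: hLR qI; case: L hL => [Ln|Ln] hL hLR qI; last by [].
case: Rb hLR qI => [Rn|Rn] hLR qI; last by [].
rewrite -!pmulrn.
have L0 : (0 < Ln)%N by [].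
have LR : (Ln <= Rn)%N by [].
set c1 := (1/2 : R) * Ln%:R * d%:R / n%:R.
set c2 := (2 : R) * Rn%:R * d%:R / n%:R.
pose B := [set S : {set 'I_d} | [exists i, [exists j, (#|seg x i j|%:R <= c1)
       && (Ln <= #|S :&: seg x i j|)%N] || [exists j, (c2 <= #|seg x i j|%:R)
       && (#|S :&: seg x i j| <= Rn)%N]]].
apply: (le_trans _ (@proc_lb R d n Omega q I _ B n0 hnd q0 q1 _)); last first.
  move=> S w hS hq; rewrite inE negb_exists => /forallP nb.
  have := qI S w hS hq.
  set J := I S w.
  set A := [set l | J.1 <= x l <= J.2].
  have cS : cnt_in x S J = #|S :&: A| by apply: eq_card => l; rewrite !inE.
  have cT : cnt_in x setT J = #|A| by apply: eq_card => l; rewrite !inE.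
  rewrite cS cT => /andP[]; rewrite !lez_nat => hL1 hR1.
  have : (0 < #|S :&: A|)%N by lia.
  rewrite card_gt0 => /set0Pn [i0]; rewrite inE => /andP[_ i0A].
  case: (ex_minP (P := fun l => l \in A) x i0A) => i iA imin.
  case: (ex_maxP (P := fun l => l \in A) x i0A) => j jA jmax.
  have hA : A = seg x i j.
    apply/setP => l; apply/idP/idP => [lA | ].
      by rewrite /seg inE (imin l lA) (jmax l lA).
    rewrite /seg !inE => /andP[h1 h2]; move: iA jA; rewrite !inE => /andP[a _] /andP[_ b].
    by rewrite (le_trans a h1) (le_trans h2 b).
  apply/andP; split.
    rewrite ltNge; apply/negP => h.
    move: (nb i); rewrite negb_or => /andP[/negP nl _]; apply: nl.
    by apply/existsP; exists j; rewrite -hA h hL1.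
  rewrite ltNge; apply/negP => h.
  move: (nb i); rewrite negb_or => /andP[_ /negP nu]; apply: nu.
  by apply/existsP; exists j; rewrite -hA h hR1.
set e := expR (- (Ln%:R / 6) : R).
have e0 : 0 <= e by apply: expR_ge0.
have npos : (0 : R) < n%:R by rewrite ltr0n.
have dposr : (0 : R) < d%:R by rewrite ltr0n.
have hn' : (n <= #|'I_d|)%N by rewrite card_ord.
have hlow : forall i, (#|[set S : {set 'I_d} | (#|S| == n) && [exists j,
    (#|seg x i j|%:R <= c1) && (Ln <= #|S :&: seg x i j|)%N]]|%:R : R) <= 'C(d,n)%:R * e.
  move=> i; have := low_i x i n0 hn' L0; rewrite card_ord; apply.
  rewrite le_eqVlt; apply/orP; left; apply/eqP; rewrite /c1.
  by field; rewrite !pnatr_eq0 -!lt0n n0 dpos.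
have c2pos : 0 < c2.
  rewrite /c2 divr_gt0 // mulr_gt0 // mulr_gt0 // ltr0n; lia.
have hup : forall i, (#|[set S : {set 'I_d} | (#|S| == n) && [exists j,
    (c2 <= #|seg x i j|%:R) && (#|S :&: seg x i j| <= Rn)%N]]|%:R : R) <= 'C(d,n)%:R * e.
  move=> i; have := @up_i R _ x i n c2 Rn n0 hn' c2pos; rewrite card_ord => h.
  apply: le_trans (h _) _.
    rewrite le_eqVlt; apply/orP; left; apply/eqP; rewrite /c2.
    by field; rewrite !pnatr_eq0 -!lt0n n0 dpos.
  apply: ler_wpM2l => //; rewrite ler_expR.
  have : (Ln%:R : R) <= Rn%:R by rewrite ler_nat.
  lra.
set N := #|[set S in B | #|S| == n]|.
have hN : (N%:R : R) <= \sum_(i : 'I_d) ('C(d,n)%:R * e + 'C(d,n)%:R * e).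
  have eB : [set S in B | #|S| == n] = [set S : {set 'I_d} | (#|S| == n) && [exists i,
     [exists j, (#|seg x i j|%:R <= c1) && (Ln <= #|S :&: seg x i j|)%N] || [exists j, (c2 <= #|seg x i j|%:R)
       && (#|S :&: seg x i j| <= Rn)%N]]].
    by apply/setP => S; rewrite !inE andbC.
  rewrite /N eB.
  apply: le_trans (_ : _ <= \sum_i (#|[set S : {set 'I_d} | (#|S| == n) &&
     ([exists j, (#|seg x i j|%:R <= c1) && (Ln <= #|S :&: seg x i j|)%N] || [exists j, (c2 <= #|seg x i j|%:R)
       && (#|S :&: seg x i j| <= Rn)%N])]|%:R : R)) _.
    rewrite -natr_sum ler_nat; exact: union_bound.
  apply: ler_sum => i _.
  apply: le_trans (@union2 R _ (fun S => #|S| == n)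
     (fun S => [exists j, (#|seg x i j|%:R <= c1) && (Ln <= #|S :&: seg x i j|)%N])
     (fun S => [exists j, (c2 <= #|seg x i j|%:R) && (#|S :&: seg x i j| <= Rn)%N])) _.
  apply: lerD; [exact: hlow | exact: hup].
rewrite sumr_const card_ord in hN.
have hNC : (N%:R : R) / 'C(d, n)%:R <= 2 * d%:R * e.
  rewrite ler_pdivrMr //; apply: le_trans hN _; rewrite -[(_ + _) *+ d]mulr_natr; rewrite le_eqVlt; apply/orP; left; apply/eqP; ring.
have := mulr_ge0 (ler0n R d) e0.
lra.
Qed.
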